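(* Let $(E,\|\cdot\|_E)$ be a fully symmetric sequence space. The following are equivalent: (i) $E$ has the uniform individual ergodic theorem property, i.e. for every $x\in E$ and every Dunford–Schwartz operator $T$ on $l_\infty$ there exists $\widehat{x}\in E$ with $\big\|\frac1n\sum_{k=0}^{n-1}T^k(x)-\widehat{x}\big\|_\infty\to0$; (ii) $E\subset c_0$; (iii) $\mathbf 1=\{1,1,1,\dots\}\notin E$.
   Context: $l_\infty$ is the Banach lattice of bounded real sequences $x=\{(x)_n\}_{n\ge1}$ with $\|x\|_\infty=\sup_n|(x)_n|$; $c_0$ is the subspace of sequences converging to $0$; $l_1$ is the space of absolutely summable sequences with $\|x\|_1=\sum_n|(x)_n|$. A linear operator $T:l_\infty\to l_\infty$ is a Dunford–Schwartz operator if $\|T(x)\|_1\le\|x\|_1$ for all $x\in l_1$ and $\|T(x)\|_\infty\le\|x\|_\infty$ for all $x\in l_\infty$. For $x\in l_\infty$, its non-increasing rearrangement is the sequence $x^*$ with $(x^* )_n=\inf\{\sup_{m\notin F}|(x)_m| : F\subset\mathbb N\text{ finite}, \operatorname{card}(F)<n\}$. A symmetric sequence space is a nonzero linear subspace $E\subset l_\infty$ with a Banach norm $\|\cdot\|_E$ such that $y\in E$, $x\in l_\infty$, $x^*\le y^*$ imply $x\in E$ and $\|x\|_E\le\|y\|_E$ (normalized so that $\|\{1,0,0,\dots\}\|_E=1$). Write $x\prec y$ if $\sum_{n=1}^k(x^* )_n\le\sum_{n=1}^k(y^* )_n$ for all $k$. A symmetric sequence space $E$ is fully symmetric if $x\in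 l_\infty$, $y\in E$, $x\prec y$ imply $x\in E$ and $\|x\|_E\le\|y\|_E$. *)

(* Defs.v *)
(* Stdlib reals + Coquelicot. Sequences are functions nat -> R,
   indexed from 0 (the paper's index n >= 1 corresponds to n-1 here). *)
From Stdlib Require Import Reals List.
From Coquelicot Require Import Coquelicot.
Open Scope R_scope.

Definition seqR := nat -> R.

Definition sadd (x y : seqR) : seqR := fun n => x n + y n.
Definition sscal (a : R) (x : seqR) : seqR := fun n => a * x n.
Definition ssub (x y : seqR) : seqR := fun n => x n - y n.
Definition szero : seqR := fun _ => 0.

Definition bounded (x : seqR) : Prop := exists M, forall n, Rabs (x n) <= M.

(* sup norm (meaningful for bounded x) *)
Definition linf_norm (x : seqR) : R :=
  real (Lub_Rbar (fun r => exists m, r = Rabs (x m))).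

Definition in_l1 (x : seqR) : Prop := ex_series (fun n => Rabs (x n)).
Definition l1_norm (x : seqR) : R := Series (fun n => Rabs (x n)).

Definition in_c0 (x : seqR) : Prop := is_lim_seq x 0.

(* Linear operators l_infty -> l_infty, represented by functions on seqR
   whose behaviour outside l_infty is irrelevant. *)
Definition linf_linear_op (T : seqR -> seqR) : Prop :=
  (forall x, bounded x -> bounded (T x)) /\
  (forall x y a b, bounded x -> bounded y ->
     T (sadd (sscal a x) (sscal b y)) = sadd (sscal a (T x)) (sscal b (T y))).

Definition dunford_schwartz (T : seqR -> seqR) : Prop :=
  linf_linear_op T /\
  (forall x, in_l1 x -> in_l1 (T x) /\ l1_norm (T x) <= l1_norm x) /\
  (forall x, bounded x -> linf_norm (T x) <= linf_norm x).

Definition sup_outside (x : seqR) (F : list nat) : R :=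
  real (Lub_Rbar (fun r => exists m, ~ In m F /\ r = Rabs (x m))).

(* Non-increasing rearrangement, 0-indexed:
   (x^* ) n = inf { sup_{m notin F} |x_m| : F finite, card F <= n }
   (paper's index n+1, condition card F < n+1). Finite sets of naturals are
   represented by duplicate-free lists. *)
Definition rearr (x : seqR) (n : nat) : R :=
  real (Glb_Rbar (fun r => exists F : list nat,
                     NoDup F /\ (length F <= n)%nat /\ r = sup_outside x F)).

Definition majorized (x y : seqR) : Prop :=
  forall k : nat, sum_n (rearr x) k <= sum_n (rearr y) k.

Definition e1 : seqR := fun n => if Nat.eqb n 0 then 1 else 0.

Definition banach_subspace_linf (E : seqR -> Prop) (normE : seqR -> R) : Prop :=
  (forall x, E x -> bounded x) /\
  E szero /\
  (exists x, E x /\ x <> szero) /\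
  (forall x y, E x -> E y -> E (sadd x y)) /\
  (forall a x, E x -> E (sscal a x)) /\
  (forall x, E x -> 0 <= normE x) /\
  (forall x, E x -> normE x = 0 -> x = szero) /\
  (forall a x, E x -> normE (sscal a x) = Rabs a * normE x) /\
  (forall x y, E x -> E y -> normE (sadd x y) <= normE x + normE y) /\
  (forall u : nat -> seqR, (forall p, E (u p)) ->
     (forall eps, 0 < eps -> exists N, forall p q, (N <= p)%nat -> (N <= q)%nat ->
        normE (ssub (u p) (u q)) < eps) ->
     exists x, E x /\ is_lim_seq (fun p => normE (ssub (u p) x)) 0).

Definition symmetric_seq_space (E : seqR -> Prop) (normE : seqR -> R) : Prop :=
  banach_subspace_linf E normE /\
  (forall x y, E y -> bounded x -> (forall n, rearr x n <= rearr y n) ->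
     E x /\ normE x <= normE y) /\
  normE e1 = 1.

Definition fully_symmetric_seq_space (E : seqR -> Prop) (normE : seqR -> R) : Prop :=
  symmetric_seq_space E normE /\
  (forall x y, bounded x -> E y -> majorized x y -> E x /\ normE x <= normE y).

Definition cesaro (T : seqR -> seqR) (x : seqR) (N : nat) : seqR :=
  fun m => / INR (S N) * sum_n (fun k => Nat.iter k T x m) N.

Definition uniform_IET_property (E : seqR -> Prop) : Prop :=
  forall x, E x -> forall T, dunford_schwartz T ->
    exists xh, E xh /\ is_lim_seq (fun N => linf_norm (ssub (cesaro T x N) xh)) 0.

Definition one_seq : seqR := fun _ => 1.

(* Main.v *)
From Pilot Require Import Defs.
From Stdlib Require Import Reals List.
From Coquelicot Require Import Coquelicot.
From Stdlib Require Import Lra Lia FunctionalExtensionality Classical ClassicalEpsilon.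
Import Pilot.Defs.
Open Scope R_scope.

Fixpoint fsum (f : nat -> R) (n : nat) : R :=
  match n with O => 0 | S n => fsum f n + f n end.

Lemma fsum_ext f g n : (forall i, (i < n)%nat -> f i = g i) -> fsum f n = fsum g n.
Proof. induction n; simpl; intros H; auto. rewrite IHn by (intros; apply H; lia). rewrite H by lia. auto. Qed.

Lemma fsum_plus f g n : fsum (fun i => f i + g i) n = fsum f n + fsum g n.
Proof. induction n; simpl; lra. Qed.

Lemma fsum_minus f g n : fsum (fun i => f i - g i) n = fsum f n - fsum g n.
Proof. induction n; simpl; lra. Qed.

Lemma fsum_scal c f n : fsum (fun i => c * f i) n = c * fsum f n.
Proof. induction n; simpl; [ring|rewrite IHn; ring]. Qed.

Lemma fsum_le f g n : (forall i, (i < n)%nat -> f i <= g i) -> fsum f n <= fsum g n.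
Proof. induction n; simpl; intros H; [lra|]. assert (f n <= g n) by (apply H; lia).
 assert (fsum f n <= fsum g n) by (apply IHn; intros; apply H; lia). lra. Qed.

Lemma fsum_nonneg f n : (forall i, 0 <= f i) -> 0 <= fsum f n.
Proof. intros H; induction n; simpl; [lra|]. specialize (H n). lra. Qed.

Lemma fsum_abs f n : Rabs (fsum f n) <= fsum (fun i => Rabs (f i)) n.
Proof. induction n; simpl. rewrite Rabs_R0; lra.
 eapply Rle_trans. apply Rabs_triang. lra. Qed.

Lemma fsum_const c n : fsum (fun _ => c) n = INR n * c.
Proof. induction n; simpl fsum. simpl; ring. rewrite IHn, S_INR; ring. Qed.

Lemma fsum_swap (f : nat -> nat -> R) m n :
  fsum (fun i => fsum (fun j => f i j) n) m = fsum (fun j => fsum (fun i => f i j) m) n.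
Proof. induction m; simpl.
 - induction n; simpl; lra.
 - rewrite IHm. rewrite <- fsum_plus. reflexivity. Qed.

Lemma fsum_split a n m : fsum a (n + m) = fsum a n + fsum (fun k => a (n + k)%nat) m.
Proof. induction m; simpl. rewrite Nat.add_0_r; ring.
 rewrite Nat.add_succ_r. simpl. rewrite IHm. ring. Qed.

Lemma fsum_mono f m n : (forall i, 0 <= f i) -> (m <= n)%nat -> fsum f m <= fsum f n.
Proof. intros H Hmn. induction Hmn; [lra|]. simpl. specialize (H m0). lra. Qed.

Lemma sum_n_fsum f n : sum_n f n = fsum f (S n).
Proof. induction n. rewrite sum_O. simpl. symmetry; apply Rplus_0_l.
 rewrite sum_Sn, IHn. reflexivity. Qed.

Lemma lub_ge (E : R -> Prop) x : (exists B, forall y, E y -> y <= B) -> E x -> x <= real (Lub_Rbar E).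
Proof. intros [B HB] Hx. destruct (Lub_Rbar_correct E) as [Hub Hl].
 assert (H1 := Hub x Hx). assert (H2 : Rbar_le (Lub_Rbar E) B) by (apply Hl; intros y Hy; apply HB; auto).
 destruct (Lub_Rbar E); simpl in *; tauto. Qed.

Lemma lub_le (E : R -> Prop) M : (exists x, E x) -> (forall y, E y -> y <= M) -> real (Lub_Rbar E) <= M.
Proof. intros [x Hx] HB. destruct (Lub_Rbar_correct E) as [Hub Hl].
 assert (H1 := Hub x Hx). assert (H2 : Rbar_le (Lub_Rbar E) M) by (apply Hl; intros y Hy; apply HB; auto).
 destruct (Lub_Rbar E); simpl in *; tauto. Qed.

Lemma glb_le (E : R -> Prop) x : (exists B, forall y, E y -> B <= y) -> E x -> real (Glb_Rbar E) <= x.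
Proof. intros [B HB] Hx. destruct (Glb_Rbar_correct E) as [Hub Hl].
 assert (H1 := Hub x Hx). assert (H2 : Rbar_le B (Glb_Rbar E)) by (apply Hl; intros y Hy; apply HB; auto).
 destruct (Glb_Rbar E); simpl in *; tauto. Qed.

Lemma glb_ge (E : R -> Prop) M : (exists x, E x) -> (forall y, E y -> M <= y) -> M <= real (Glb_Rbar E).
Proof. intros [x Hx] HB. destruct (Glb_Rbar_correct E) as [Hub Hl].
 assert (H1 := Hub x Hx). assert (H2 : Rbar_le M (Glb_Rbar E)) by (apply Hl; intros y Hy; apply HB; auto).
 destruct (Glb_Rbar E); simpl in *; tauto. Qed.

Lemma fresh_notin (F : list nat) : exists m, ~ In m F.
Proof. exists (S (list_max F)). intros H.
 assert (H0 : List.Forall (fun k => (k <= list_max F)%nat) F) by (apply list_max_le; lia).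
 rewrite Forall_forall in H0. specialize (H0 _ H). lia. Qed.

Lemma linf_ge x m : bounded x -> Rabs (x m) <= linf_norm x.
Proof. intros [M HM]. unfold linf_norm. apply lub_ge. exists M. intros y [k ->]. auto. exists m; auto. Qed.

Lemma linf_le x M : (forall m, Rabs (x m) <= M) -> linf_norm x <= M.
Proof. intros H. unfold linf_norm. apply lub_le. exists (Rabs (x 0%nat)), 0%nat; auto.
 intros y [k ->]; auto. Qed.

Lemma linf_nonneg x : bounded x -> 0 <= linf_norm x.
Proof. intros Hb. eapply Rle_trans; [apply Rabs_pos|]. apply (linf_ge x 0%nat Hb). Qed.

Lemma sup_out_ge x F m : bounded x -> ~ In m F -> Rabs (x m) <= sup_outside x F.
Proof. intros [M HM] Hm. unfold sup_outside. apply lub_ge. exists M. intros y [k [_ ->]]. auto. exists m; auto. Qed.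

Lemma sup_out_le x F M : (forall m, ~ In m F -> Rabs (x m) <= M) -> sup_outside x F <= M.
Proof. intros H. unfold sup_outside. destruct (fresh_notin F) as [m0 Hm0]. apply lub_le.
 exists (Rabs (x m0)), m0; auto. intros y [k [Hk ->]]; auto. Qed.

Lemma sup_out_nonneg x F : bounded x -> 0 <= sup_outside x F.
Proof. intros Hb. destruct (fresh_notin F) as [m0 Hm0]. eapply Rle_trans; [apply Rabs_pos|]. apply (sup_out_ge x F m0 Hb Hm0). Qed.

Lemma rearr_le x n F : bounded x -> NoDup F -> (length F <= n)%nat -> rearr x n <= sup_outside x F.
Proof. intros Hb HF Hl. unfold rearr. apply glb_le. exists 0. intros y [G [_ [_ ->]]]. apply sup_out_nonneg; auto.
 exists F; auto. Qed.

Lemma rearr_ge x n c : (forall F, NoDup F -> (length F <= n)%nat -> c <= sup_outside x F) -> c <= rearr x n.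
Proof. intros H. unfold rearr. apply glb_ge. exists (sup_outside x nil), nil. split; [constructor|]. simpl; split; [lia|auto].
 intros y [G [HG [Hl ->]]]. auto. Qed.


Definition P (T : seqR -> seqR) (k : nat) : seqR -> seqR := Nat.iter k T.
Definition vsum (f : nat -> seqR) (n : nat) : seqR := fun i => fsum (fun k => f k i) n.
Definition avg T (x : seqR) (n : nat) : seqR := sscal (/ INR n) (vsum (fun k => P T k x) n).

Lemma bounded_add u v : bounded u -> bounded v -> bounded (sadd u v).
Proof. intros [A HA] [B HB]. exists (A + B). intros n. unfold sadd.
 eapply Rle_trans; [apply Rabs_triang|]. specialize (HA n); specialize (HB n); lra. Qed.

Lemma bounded_scal c u : bounded u -> bounded (sscal c u).
Proof. intros [A HA]. exists (Rabs c * A). intros n. unfold sscal. rewrite Rabs_mult.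
 apply Rmult_le_compat_l; [apply Rabs_pos|auto]. Qed.

Lemma bounded_zero : bounded szero.
Proof. exists 0. intros; unfold szero; rewrite Rabs_R0; lra. Qed.

Lemma bounded_vsum f n : (forall k, (k < n)%nat -> bounded (f k)) -> bounded (vsum f n).
Proof. induction n; intros H. apply bounded_zero.
 change (bounded (sadd (vsum f n) (f n))). apply bounded_add. apply IHn; intros; apply H; lia. apply H; lia. Qed.


Lemma DS_bnd T x : dunford_schwartz T -> bounded x -> bounded (T x).
Proof. intros [[H _] _]. auto. Qed.

Lemma DS_add T u v : dunford_schwartz T -> bounded u -> bounded v -> T (sadd u v) = sadd (T u) (T v).
Proof. intros [[_ H] _] Hu Hv. specialize (H u v 1 1 Hu Hv).
 replace (sadd (sscal 1 u) (sscal 1 v)) with (sadd u v) in H by (apply functional_extensionality; intros; unfold sadd, sscal; ring).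
 rewrite H. apply functional_extensionality; intros; unfold sadd, sscal; ring. Qed.

Lemma DS_scal T c u : dunford_schwartz T -> bounded u -> T (sscal c u) = sscal c (T u).
Proof. intros [[_ H] _] Hu. specialize (H u u c 0 Hu Hu).
 replace (sadd (sscal c u) (sscal 0 u)) with (sscal c u) in H by (apply functional_extensionality; intros; unfold sadd, sscal; ring).
 rewrite H. apply functional_extensionality; intros; unfold sadd, sscal; ring. Qed.

Lemma DS_zero T : dunford_schwartz T -> T szero = szero.
Proof. intros HT. replace szero with (sscal 0 szero) by (apply functional_extensionality; intros; unfold sscal, szero; ring).
 rewrite DS_scal; auto using bounded_zero. apply functional_extensionality; intros; unfold sscal, szero; ring. Qed.

Lemma DS_sup T x M : dunford_schwartz T -> bounded x -> (forall i, Rabs (x i) <= M) -> forall i, Rabs (T x i) <= M.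
Proof. intros HT Hx H i. pose proof (DS_bnd T x HT Hx) as HTx. destruct HT as [_ [_ Hi]].
 eapply Rle_trans. apply (linf_ge _ i HTx). eapply Rle_trans. apply (Hi x Hx). apply linf_le; auto. Qed.

Lemma P_S T k x : P T (S k) x = T (P T k x).
Proof. reflexivity. Qed.

Lemma P_bnd T k x : dunford_schwartz T -> bounded x -> bounded (P T k x).
Proof. intros HT Hx. induction k. auto. rewrite P_S. apply DS_bnd; auto. Qed.

Lemma P_add T k u v : dunford_schwartz T -> bounded u -> bounded v -> P T k (sadd u v) = sadd (P T k u) (P T k v).
Proof. intros HT Hu Hv. induction k. reflexivity. rewrite !P_S, IHk. apply DS_add; auto using P_bnd. Qed.

Lemma P_scal T k c u : dunford_schwartz T -> bounded u -> P T k (sscal c u) = sscal c (P T k u).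
Proof. intros HT Hu. induction k. reflexivity. rewrite !P_S, IHk. apply DS_scal; auto using P_bnd. Qed.

Lemma P_zero T k : dunford_schwartz T -> P T k szero = szero.
Proof. intros HT. induction k. reflexivity. rewrite P_S, IHk. apply DS_zero; auto. Qed.

Lemma P_sup T k x M : dunford_schwartz T -> bounded x -> (forall i, Rabs (x i) <= M) -> forall i, Rabs (P T k x i) <= M.
Proof. intros HT Hx H. induction k. auto. rewrite P_S. apply DS_sup; auto using P_bnd. Qed.

Lemma P_add_iter T j k x : P T j (P T k x) = P T (j + k) x.
Proof. unfold P. rewrite Nat.iter_add. reflexivity. Qed.

Lemma P_vsum T j f n : dunford_schwartz T -> (forall k, (k < n)%nat -> bounded (f k)) ->
  P T j (vsum f n) = vsum (fun k => P T j (f k)) n.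
Proof. intros HT. induction n; intros H.
 - change (vsum f 0) with szero. rewrite P_zero; auto.
 - change (vsum f (S n)) with (sadd (vsum f n) (f n)). rewrite P_add; [| auto | apply bounded_vsum; intros; apply H; lia | apply H; lia].
   rewrite IHn by (intros; apply H; lia). reflexivity. Qed.

Definition L1 (u : seqR) (B : R) : Prop := in_l1 u /\ forall m, fsum (fun i => Rabs (u i)) m <= B.

Lemma L1_of_bound u B : (forall m, fsum (fun i => Rabs (u i)) m <= B) -> L1 u B.
Proof. intros H. split; auto. unfold in_l1.
 assert (Hf : ex_finite_lim_seq (sum_n (fun i => Rabs (u i)))).
 { apply ex_finite_lim_seq_incr with B. intros n. rewrite !sum_n_fsum. simpl. pose proof (Rabs_pos (u (S n))). lra.
   intros n. rewrite sum_n_fsum. auto. }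
 destruct Hf as [l Hl]. exists l. exact Hl. Qed.

Lemma L1_part_le u m : in_l1 u -> fsum (fun i => Rabs (u i)) m <= l1_norm u.
Proof. intros Hu. unfold l1_norm. pose proof (Series_correct _ Hu) as Hs.
 assert (H := is_lim_seq_le_loc (fun _ => fsum (fun i => Rabs (u i)) m) (sum_n (fun i => Rabs (u i)))
   (fsum (fun i => Rabs (u i)) m) (Series (fun n : nat => Rabs (u n)))).
 simpl in H. apply H. exists m. intros n Hn. rewrite sum_n_fsum. apply fsum_mono; auto. intros; apply Rabs_pos.
 apply is_lim_seq_const. exact Hs. Qed.

Lemma L1_norm_le u B : L1 u B -> l1_norm u <= B.
Proof. intros [Hu H]. unfold l1_norm. pose proof (Series_correct _ Hu) as Hs.
 assert (H1 := is_lim_seq_le (sum_n (fun i => Rabs (u i))) (fun _ => B) (Series (fun n : nat => Rabs (u n))) B).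
 simpl in H1. apply H1. intros n; rewrite sum_n_fsum; auto. exact Hs. apply is_lim_seq_const. Qed.

Lemma L1_T T u B : dunford_schwartz T -> L1 u B -> L1 (T u) B.
Proof. intros [_ [H1 _]] [Hu HB]. destruct (H1 u Hu) as [HTu Hn]. split; auto.
 intros m. eapply Rle_trans. apply L1_part_le; auto. eapply Rle_trans. apply Hn. apply L1_norm_le. split; auto. Qed.

Lemma L1_pt u B i : L1 u B -> Rabs (u i) <= B.
Proof. intros [_ H]. eapply Rle_trans; [|apply (H (S i))]. simpl.
 pose proof (fsum_nonneg (fun i => Rabs (u i)) i (fun j => Rabs_pos (u j))). lra. Qed.

Lemma L1_bounded u B : L1 u B -> bounded u.
Proof. intros H. exists B. intros; eapply L1_pt; eauto. Qed.

Lemma L1_nonneg u B : L1 u B -> 0 <= B.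
Proof. intros [_ H]. apply (H 0%nat). Qed.

Lemma L1_weaken u B B' : L1 u B -> B <= B' -> L1 u B'.
Proof. intros [Hu H] HB. split; auto. intros m; specialize (H m); lra. Qed.

Lemma L1_add u v A B : L1 u A -> L1 v B -> L1 (sadd u v) (A + B).
Proof. intros [_ HA] [_ HB]. apply L1_of_bound. intros m. unfold sadd.
 eapply Rle_trans. apply fsum_le. intros i _. apply Rabs_triang. rewrite fsum_plus.
 specialize (HA m); specialize (HB m); lra. Qed.

Lemma L1_scal c u A : L1 u A -> L1 (sscal c u) (Rabs c * A).
Proof. intros [_ HA]. apply L1_of_bound. intros m. unfold sscal.
 rewrite (fsum_ext _ (fun i => Rabs c * Rabs (u i))) by (intros; apply Rabs_mult).
 rewrite fsum_scal. apply Rmult_le_compat_l; auto using Rabs_pos. Qed.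

Lemma L1_vsum f b n : (forall k, (k < n)%nat -> L1 (f k) (b k)) -> L1 (vsum f n) (fsum b n).
Proof. induction n; intros H. apply L1_of_bound. intros m. unfold vsum; simpl.
 rewrite (fsum_ext _ (fun _ => 0)) by (intros; apply Rabs_R0). rewrite fsum_const; lra.
 change (L1 (sadd (vsum f n) (f n)) (fsum b n + b n)). apply L1_add. apply IHn; intros; apply H; lia. apply H; lia. Qed.

Lemma L1_P T k u B : dunford_schwartz T -> L1 u B -> L1 (P T k u) B.
Proof. intros HT H. induction k. auto. rewrite P_S. apply L1_T; auto. Qed.

Lemma L1_c0 u B : L1 u B -> forall eps, 0 < eps -> exists N, forall m, (N <= m)%nat -> Rabs (u m) < eps.
Proof. intros [Hu _] eps He. pose proof (ex_series_lim_0 _ Hu) as Hl.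
 apply is_lim_seq_spec in Hl. destruct (Hl (mkposreal eps He)) as [N HN]. exists N. intros m Hm.
 specialize (HN m Hm). simpl in HN. rewrite Rminus_0_r, Rabs_Rabsolu in HN. auto. Qed.

Lemma avg_eq T x N : cesaro T x N = avg T x (S N).
Proof. apply functional_extensionality; intros m. unfold cesaro, avg, sscal, vsum. rewrite sum_n_fsum. reflexivity. Qed.

Lemma avg_add T u v n : dunford_schwartz T -> bounded u -> bounded v -> avg T (sadd u v) n = sadd (avg T u n) (avg T v n).
Proof. intros HT Hu Hv. apply functional_extensionality; intros i. unfold avg, sscal, vsum, sadd.
 rewrite (fsum_ext _ (fun k => P T k u i + P T k v i)). rewrite fsum_plus; ring.
 intros k _. change (fun n => u n + v n) with (sadd u v). rewrite P_add; auto. Qed.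

Lemma avg_scal T c u n : dunford_schwartz T -> bounded u -> avg T (sscal c u) n = sscal c (avg T u n).
Proof. intros HT Hu. apply functional_extensionality; intros i. unfold avg, sscal, vsum.
 rewrite (fsum_ext _ (fun k => c * P T k u i)). rewrite fsum_scal; ring.
 intros k _. change (fun n => c * u n) with (sscal c u). rewrite P_scal; auto. Qed.

Lemma avg_bnd T u n : dunford_schwartz T -> bounded u -> bounded (avg T u n).
Proof. intros HT Hu. apply bounded_scal, bounded_vsum. intros; apply P_bnd; auto. Qed.

Lemma avg_sup T u n M : dunford_schwartz T -> bounded u -> (forall i, Rabs (u i) <= M) -> (0 < n)%nat ->
  forall i, Rabs (avg T u n i) <= M.
Proof. intros HT Hu H Hn i. unfold avg, sscal, vsum. assert (0 < INR n) by (apply lt_0_INR; auto).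
 rewrite Rabs_mult, Rabs_right by (left; apply Rinv_0_lt_compat; auto).
 apply Rmult_le_reg_l with (INR n); auto. rewrite <- Rmult_assoc, Rinv_r, Rmult_1_l by lra.
 eapply Rle_trans. apply fsum_abs. eapply Rle_trans. apply fsum_le with (g := fun _ => M). intros; apply P_sup; auto.
 rewrite fsum_const; lra. Qed.

Lemma avg_L1 T u n B : dunford_schwartz T -> L1 u B -> (0 < n)%nat -> L1 (avg T u n) B.
Proof. intros HT H Hn. assert (0 < INR n) by (apply lt_0_INR; auto). unfold avg.
 eapply L1_weaken. apply L1_scal. apply L1_vsum with (b := fun _ => B). intros; apply L1_P; auto.
 rewrite fsum_const, Rabs_right by (left; apply Rinv_0_lt_compat; auto). right; field. lra. Qed.


Definition SQ (u : seqR) (C : R) : Prop := forall m, fsum (fun i => (u i)^2) m <= C.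
Definition ev (j : nat) : seqR := fun i => if Nat.eqb i j then 1 else 0.
Definition tr (z : seqR) (n : nat) : seqR := fun i => if Nat.ltb i n then z i else 0.

Lemma tr_S z n : tr z (S n) = sadd (tr z n) (sscal (z n) (ev n)).
Proof. apply functional_extensionality; intros i. unfold tr, sadd, sscal, ev.
 destruct (Nat.ltb_spec i (S n)); destruct (Nat.ltb_spec i n); destruct (Nat.eqb_spec i n); subst; try lia; ring. Qed.

Lemma tr_0 z : tr z 0 = szero.
Proof. apply functional_extensionality; intros i. reflexivity. Qed.

Lemma ev_bounded j : bounded (ev j).
Proof. exists 1. intros i; unfold ev; destruct (Nat.eqb i j); rewrite ?Rabs_R1, ?Rabs_R0; lra. Qed.

Lemma tr_bounded z n : bounded (tr z n).
Proof. induction n. rewrite tr_0; apply bounded_zero. rewrite tr_S. apply bounded_add; auto. apply bounded_scal, ev_bounded. Qed.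

Lemma T_tr T z n : dunford_schwartz T -> forall i, T (tr z n) i = fsum (fun j => z j * T (ev j) i) n.
Proof. intros HT. induction n; intros i. rewrite tr_0, DS_zero; auto.
 rewrite tr_S, DS_add, DS_scal; auto using tr_bounded, ev_bounded, bounded_scal.
 unfold sadd, sscal. simpl. rewrite IHn. reflexivity. Qed.

Lemma fsum_ev j m : fsum (fun i => Rabs (ev j i)) m = if Nat.leb m j then 0 else 1.
Proof. induction m; simpl fsum. reflexivity. rewrite IHm. unfold ev.
 destruct (Nat.leb_spec m j); destruct (Nat.leb_spec (S m) j); destruct (Nat.eqb_spec m j); subst; try lia;
 rewrite ?Rabs_R0, ?Rabs_R1; ring. Qed.

Lemma L1_ev j : L1 (ev j) 1.
Proof. apply L1_of_bound. intros m. rewrite fsum_ev. destruct (Nat.leb m j); lra. Qed.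

Lemma row_bound T i n : dunford_schwartz T -> fsum (fun j => Rabs (T (ev j) i)) n <= 1.
Proof. intros HT. set (s := fun j => if Rle_dec 0 (T (ev j) i) then 1 else -1).
 assert (Hs : forall j, s j * T (ev j) i = Rabs (T (ev j) i)).
 { intros j; unfold s. destruct (Rle_dec 0 (T (ev j) i)). rewrite Rabs_right; lra. rewrite Rabs_left; lra. }
 assert (H1 : Rabs (T (tr s n) i) <= 1).
 { apply DS_sup; auto using tr_bounded. intros l. unfold tr, s. destruct (Nat.ltb l n).
   destruct (Rle_dec _ _); apply Rabs_le; lra. rewrite Rabs_R0; lra. }
 rewrite T_tr in H1; auto. rewrite (fsum_ext _ _ _ (fun j _ => Hs j)) in H1.
 rewrite Rabs_right in H1; auto. apply Rle_ge, fsum_nonneg. intros; apply Rabs_pos. Qed.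

Lemma col_bound T j m : dunford_schwartz T -> fsum (fun i => Rabs (T (ev j) i)) m <= 1.
Proof. intros HT. destruct (L1_T T _ _ HT (L1_ev j)) as [_ H]. auto. Qed.

Lemma jensen w a n : (forall j, 0 <= w j) -> fsum w n <= 1 ->
  (fsum (fun j => w j * a j) n)^2 <= fsum (fun j => w j * (a j)^2) n.
Proof. intros Hw HS. set (M := fsum (fun j => w j * a j) n).
 assert (H0 : 0 <= fsum (fun j => w j * (a j - M)^2) n).
 { apply fsum_nonneg. intros j. apply Rmult_le_pos; auto; apply pow2_ge_0. }
 rewrite (fsum_ext _ (fun j => (w j * (a j)^2 + (-2*M) * (w j * a j)) + M^2 * w j)) in H0 by (intros; ring).
 rewrite fsum_plus, fsum_plus, fsum_scal, fsum_scal in H0. fold M in H0.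
 assert (0 <= fsum w n) by (apply fsum_nonneg; auto).
 assert (M^2 * fsum w n <= M^2) by (assert (0 <= M^2) by nra; nra). nra. Qed.

Lemma jensen_abs c z n : fsum (fun j => Rabs (c j)) n <= 1 ->
  (fsum (fun j => c j * z j) n)^2 <= fsum (fun j => Rabs (c j) * (z j)^2) n.
Proof. intros H. set (a := fun j => if Rle_dec 0 (c j) then z j else - z j).
 rewrite (fsum_ext (fun j => c j * z j) (fun j => Rabs (c j) * a j)).
 rewrite (fsum_ext (fun j => Rabs (c j) * (z j)^2) (fun j => Rabs (c j) * (a j)^2)).
 apply jensen; auto. intros; apply Rabs_pos.
 intros j _; unfold a; destruct (Rle_dec 0 (c j)); ring.
 intros j _; unfold a; destruct (Rle_dec 0 (c j)). rewrite Rabs_right; lra. rewrite Rabs_left; lra. Qed.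

Lemma schur_fin T z n C : dunford_schwartz T -> fsum (fun j => (z j)^2) n <= C -> SQ (T (tr z n)) C.
Proof. intros HT Hz m.
 rewrite (fsum_ext _ (fun i => (fsum (fun j => T (ev j) i * z j) n)^2)).
 2:{ intros i _. rewrite T_tr; auto. f_equal. apply fsum_ext; intros; ring. }
 eapply Rle_trans. apply fsum_le. intros i _. apply jensen_abs. apply row_bound; auto.
 rewrite fsum_swap. eapply Rle_trans; [|apply Hz]. apply fsum_le. intros j _.
 rewrite (fsum_ext _ (fun i => (z j)^2 * Rabs (T (ev j) i))) by (intros; ring). rewrite fsum_scal.
 pose proof (col_bound T j m HT). assert (0 <= (z j)^2) by nra. nra. Qed.

Lemma L1_tail z B : L1 z B -> forall d, 0 < d -> exists n, L1 (fun i => if Nat.ltb i n then 0 else z i) d.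
Proof. intros [Hz _] d Hd. pose proof (Series_correct _ Hz) as Hs.
 assert (Hs' : is_lim_seq (sum_n (fun i => Rabs (z i))) (l1_norm z)) by exact Hs.
 apply is_lim_seq_spec in Hs'. destruct (Hs' (mkposreal d Hd)) as [N HN]. specialize (HN N (le_n _)). simpl in HN.
 rewrite sum_n_fsum in HN. exists (S N). apply L1_of_bound. intros m.
 set (tl := fun i => if Nat.ltb i (S N) then 0 else z i).
 eapply Rle_trans. apply (fsum_mono (fun i => Rabs (tl i)) m (S N + m)). intros; apply Rabs_pos. lia.
 rewrite fsum_split. rewrite (fsum_ext _ (fun _ => 0)). rewrite fsum_const.
 rewrite (fsum_ext _ (fun k => Rabs (z (S N + k)%nat))).
 pose proof (fsum_split (fun i => Rabs (z i)) (S N) m). pose proof (L1_part_le z (S N + m) Hz).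
 apply Rabs_def2 in HN. lra.
 intros k _. unfold tl. destruct (Nat.ltb_spec (S N + k) (S N)); [lia|auto].
 intros i Hi. unfold tl. destruct (Nat.ltb_spec i (S N)); [apply Rabs_R0|lia]. Qed.

Lemma perturb u e K d m : (forall i, Rabs (u i) <= K) -> L1 e d -> d <= 1 ->
  fsum (fun i => (u i + e i)^2) m <= fsum (fun i => (u i)^2) m + (2*K+1)*d.
Proof. intros Hu He Hd. assert (HK : 0 <= K) by (pose proof (Hu 0%nat); pose proof (Rabs_pos (u 0%nat)); lra).
 assert (Hm := proj2 He m).
 eapply Rle_trans. apply (fsum_le _ (fun i => (u i)^2 + (2*K+1) * Rabs (e i))).
 intros i _. assert (Rabs (e i) <= d) by (eapply L1_pt; eauto). specialize (Hu i).
 assert (Rabs (2 * u i + e i) <= 2*K+1).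
 { eapply Rle_trans. apply Rabs_triang. rewrite Rabs_mult, Rabs_right by lra. lra. }
 replace ((u i + e i)^2) with ((u i)^2 + e i * (2 * u i + e i)) by ring.
 assert (e i * (2 * u i + e i) <= Rabs (e i) * (2*K+1)).
 { eapply Rle_trans. apply Rle_abs. rewrite Rabs_mult. apply Rmult_le_compat_l; auto using Rabs_pos. } lra.
 rewrite fsum_plus, fsum_scal. nra. Qed.

Lemma le_eps a b : (forall e, 0 < e -> a <= b + e) -> a <= b.
Proof. intros H. destruct (Rle_dec a b); auto. specialize (H ((a - b)/2)). lra. Qed.

Lemma L1_tr z n B : L1 z B -> L1 (tr z n) B.
Proof. intros [_ H]. apply L1_of_bound. intros m. eapply Rle_trans; [|apply (H m)]. apply fsum_le.
 intros i _. unfold tr. destruct (Nat.ltb i n). lra. rewrite Rabs_R0; apply Rabs_pos. Qed.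

Lemma schur T z B C : dunford_schwartz T -> L1 z B -> SQ z C -> SQ (T z) C.
Proof. intros HT Hz HC m. apply le_eps. intros eps He.
 assert (HB : 0 <= B) by (eapply L1_nonneg; eauto).
 set (d := Rmin 1 (eps / (2*B+1))).
 assert (Hd0 : 0 < d) by (unfold d; apply Rmin_glb_lt; [lra| apply Rdiv_lt_0_compat; lra]).
 assert (Hd1 : d <= 1) by apply Rmin_l.
 assert (Hd2 : (2*B+1) * d <= eps).
 { assert (d <= eps / (2*B+1)) by apply Rmin_r. apply Rmult_le_compat_l with (r := 2*B+1) in H; [|lra].
   replace ((2*B+1) * (eps / (2*B+1))) with eps in H by (field; lra). lra. }
 destruct (L1_tail z B Hz d Hd0) as [n Hn].
 set (tl := fun i => if Nat.ltb i n then 0 else z i) in Hn.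
 assert (Hzs : z = sadd (tr z n) tl).
 { apply functional_extensionality; intros i. unfold sadd, tr, tl. destruct (Nat.ltb i n); ring. }
 assert (Htlb : bounded tl) by (eapply L1_bounded; eauto).
 rewrite Hzs, DS_add; auto using tr_bounded.
 unfold sadd. eapply Rle_trans. apply perturb with (K := B) (d := d); auto.
 intros i. apply L1_pt with (u := T (tr z n)). apply L1_T; auto. apply L1_tr; auto.
 apply L1_T; auto.
 assert (fsum (fun i => (T (tr z n) i)^2) m <= C).
 { apply schur_fin; auto. }
 lra. Qed.


Definition q (u : seqR) : R := real (Lub_Rbar (fun t => exists m, t = fsum (fun i => (u i)^2) m)).

Lemma q_ge u C m : SQ u C -> fsum (fun i => (u i)^2) m <= q u.
Proof. intros H. unfold q. apply lub_ge. exists C. intros t [k ->]. apply H. exists m; auto. Qed.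

Lemma q_le u C : SQ u C -> q u <= C.
Proof. intros H. unfold q. apply lub_le. exists (fsum (fun i => (u i)^2) 0), 0%nat; auto. intros t [k ->]. apply H. Qed.

Lemma q_SQ u C : SQ u C -> SQ u (q u).
Proof. intros H m. eapply q_ge; eauto. Qed.

Lemma q_nonneg u C : SQ u C -> 0 <= q u.
Proof. intros H. apply (q_ge u C 0%nat H). Qed.

Lemma q_approx u C e : SQ u C -> 0 < e -> exists m, q u - e < fsum (fun i => (u i)^2) m.
Proof. intros H He. apply NNPP. intros Hn.
 assert (q u <= q u - e). { unfold q at 1. apply lub_le. exists (fsum (fun i => (u i)^2) 0), 0%nat; auto.
   intros t [k ->]. apply Rnot_lt_le. intros Hk. apply Hn. exists k. auto. } lra. Qed.

Lemma L1_SQ u B : L1 u B -> SQ u (B * B).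
Proof. intros H m. pose proof (L1_nonneg _ _ H) as HB.
 eapply Rle_trans. apply (fsum_le _ (fun i => B * Rabs (u i))). intros i _.
 pose proof (L1_pt u B i H). pose proof (Rabs_pos (u i)). rewrite <- (pow2_abs (u i)). nra.
 rewrite fsum_scal. apply Rmult_le_compat_l; auto. apply H. Qed.

Lemma SQ_P T k z B C : dunford_schwartz T -> L1 z B -> SQ z C -> SQ (P T k z) C.
Proof. intros HT Hz HC. induction k. auto. rewrite P_S. apply (schur T (P T k z) B C HT (L1_P T k z B HT Hz) IHk). Qed.

Lemma SQ_avg T z n B C : dunford_schwartz T -> L1 z B -> SQ z C -> (0 < n)%nat -> SQ (avg T z n) C.
Proof. intros HT Hz HC Hn m. assert (Hn' : 0 < INR n) by (apply lt_0_INR; auto).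
 unfold avg, sscal, vsum.
 eapply Rle_trans. apply (fsum_le _ (fun i => fsum (fun k => / INR n * (P T k z i)^2) n)).
 intros i _. rewrite <- fsum_scal. apply jensen. intros; left; apply Rinv_0_lt_compat; auto.
 rewrite fsum_const. right; field; lra.
 rewrite fsum_swap. eapply Rle_trans. apply (fsum_le _ (fun _ => / INR n * C)).
 intros k _. rewrite fsum_scal. apply Rmult_le_compat_l. left; apply Rinv_0_lt_compat; auto.
 apply (SQ_P T k z B C HT Hz HC). rewrite fsum_const. right; field; lra. Qed.

Lemma small_inv c eta : 0 < eta -> exists N0, forall N, (N0 <= N)%nat -> c / INR (S N) <= eta.
Proof. intros He. destruct (INR_archimed eta c He) as [N0 H]. exists N0. intros N HN.
 assert (INR N0 <= INR (S N)) by (apply le_INR; lia). assert (0 < INR (S N)) by (apply lt_0_INR; lia).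
 apply Rmult_le_reg_r with (INR (S N)); auto. unfold Rdiv. rewrite Rmult_assoc, Rinv_l by lra. nra. Qed.

Lemma fsum_shift a j K : fsum (fun k => a (k + j)%nat) K = fsum a K + fsum (fun l => a (K + l)%nat) j - fsum a j.
Proof. pose proof (fsum_split a j K). pose proof (fsum_split a K j).
 rewrite Nat.add_comm in H. rewrite (fsum_ext _ (fun k => a (j + k)%nat)) by (intros; f_equal; lia). lra. Qed.

Lemma L1_sub u v A B : L1 u A -> L1 v B -> L1 (ssub u v) (A + B).
Proof. intros [_ HA] [_ HB]. apply L1_of_bound. intros m. unfold ssub.
 eapply Rle_trans. apply fsum_le. intros i _. apply Rabs_triang. rewrite fsum_plus.
 rewrite (fsum_ext (fun i => Rabs (- v i)) (fun i => Rabs (v i))) by (intros; apply Rabs_Ropp).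
 specialize (HA m); specialize (HB m); lra. Qed.

Lemma avg_P T k0 y n Y : dunford_schwartz T -> L1 y Y -> forall i,
  P T k0 (avg T y n) i = / INR n * fsum (fun j => P T (k0 + j) y i) n.
Proof. intros HT Hy i. unfold avg. rewrite P_scal, P_vsum; auto.
 unfold sscal, vsum. f_equal. apply fsum_ext; intros; rewrite P_add_iter; auto.
 intros; eapply P_bnd; eauto using L1_bounded. apply bounded_vsum. intros; eapply P_bnd; eauto using L1_bounded. Qed.

Lemma KL T y Y n k : dunford_schwartz T -> L1 y Y -> (0 < n)%nat -> (0 < k)%nat ->
  L1 (ssub (avg T (avg T y n) k) (avg T y k)) (2 * INR n * Y / INR k).
Proof. intros HT Hy Hn Hk. assert (Hn' : 0 < INR n) by (apply lt_0_INR; auto).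
 assert (Hk' : 0 < INR k) by (apply lt_0_INR; auto). assert (HY := L1_nonneg _ _ Hy).
 assert (Heq : ssub (avg T (avg T y n) k) (avg T y k) = sscal (/INR n) (vsum (fun j => sscal (/INR k)
    (ssub (vsum (fun l => P T (k+l) y) j) (vsum (fun l => P T l y) j))) n)).
 { apply functional_extensionality; intros i.
   assert (HL : ssub (avg T (avg T y n) k) (avg T y k) i = / INR k * fsum (fun k0 => P T k0 (avg T y n) i) k - / INR k * fsum (fun k0 => P T k0 y i) k) by reflexivity.
   rewrite HL. clear HL.
   rewrite (fsum_ext (fun k0 => P T k0 (avg T y n) i) (fun k0 => / INR n * fsum (fun j => P T (k0 + j) y i) n) k (fun k0 _ => avg_P T k0 y n Y HT Hy i)).
   rewrite fsum_scal. rewrite (fsum_swap (fun k0 j => P T (k0 + j) y i)).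
   rewrite (fsum_ext (fun j => fsum (fun k0 => P T (k0 + j) y i) k) (fun j => fsum (fun l => P T l y i) k + (fsum (fun l => P T (k + l) y i) j - fsum (fun l => P T l y i) j)) n).
   2:{ intros j _. pose proof (fsum_shift (fun l => P T l y i) j k) as Hs. cbv beta in Hs. rewrite Hs. ring. }
   rewrite fsum_plus, fsum_const. unfold sscal, vsum, ssub.
   rewrite fsum_scal.
   replace (fsum (fun j => fsum (fun k0 => P T (k + k0) y i) j + - fsum (fun k0 => P T k0 y i) j) n) with (fsum (fun j => fsum (fun l => P T (k + l) y i) j - fsum (fun l => P T l y i) j) n) by reflexivity.
   field. split; lra. }
 rewrite Heq. eapply L1_weaken. apply L1_scal.
 apply L1_vsum with (b := fun _ => / INR k * (INR n * Y + INR n * Y)). intros j Hj.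
 eapply L1_weaken. apply L1_scal. apply L1_sub.
 apply L1_vsum with (b := fun _ => Y). intros; apply L1_P; auto.
 apply L1_vsum with (b := fun _ => Y). intros; apply L1_P; auto.
 rewrite !fsum_const. rewrite Rabs_right by (left; apply Rinv_0_lt_compat; auto).
 assert (INR j <= INR n) by (apply le_INR; lia).
 apply Rmult_le_compat_l. left; apply Rinv_0_lt_compat; auto. nra.
 rewrite fsum_const. rewrite Rabs_right by (left; apply Rinv_0_lt_compat; auto).
 right. field. split; lra. Qed.

Lemma L1_ssub_sym u v B : L1 (ssub u v) B -> L1 (ssub v u) B.
Proof. intros [_ H]. apply L1_of_bound. intros m. rewrite (fsum_ext _ (fun i => Rabs (ssub u v i))). auto.
 intros i _. unfold ssub. apply Rabs_minus_sym. Qed.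

Lemma SQ_perturb u e K C d : (forall i, Rabs (u i) <= K) -> SQ u C -> L1 e d -> d <= 1 -> SQ (sadd u e) (C + (2*K+1)*d).
Proof. intros Hu HC He Hd m. unfold sadd. eapply Rle_trans. apply perturb; eauto. specialize (HC m). lra. Qed.

Lemma sq_le_abs x e : 0 < e -> x^2 <= e^2 -> Rabs x <= e.
Proof. intros He H. rewrite <- pow2_abs in H. pose proof (Rabs_pos x). nra. Qed.

Lemma avg_cauchy T y Y : dunford_schwartz T -> L1 y Y -> forall eps, 0 < eps -> exists N0, forall N N',
  (N0 <= N)%nat -> (N0 <= N')%nat -> forall i, Rabs (avg T y (S N) i - avg T y (S N') i) <= eps.
Proof. intros HT Hy eps Heps. assert (HY := L1_nonneg _ _ Hy).
 set (A := fun N => avg T y (S N)).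
 assert (LA : forall N, L1 (A N) Y) by (intros; apply avg_L1; auto; lia).
 assert (SA : forall N, SQ (A N) (q (A N))) by (intros; eapply q_SQ; apply L1_SQ; eauto).
 assert (BA : forall N i, Rabs (A N i) <= Y) by (intros; eapply L1_pt; eauto).
 set (r := real (Glb_Rbar (fun t => exists N, t = q (A N)))).
 assert (r_le : forall N, r <= q (A N)).
 { intros N. unfold r. apply glb_le. exists 0. intros t [k ->]. eapply q_nonneg; eauto. exists N; auto. }
 assert (r_approx : forall eta, 0 < eta -> exists M, q (A M) < r + eta).
 { intros eta He. apply NNPP; intros Hn. assert (r + eta <= r); [|lra].
   unfold r at 2. apply glb_ge. exists (q (A 0%nat)), 0%nat; auto. intros t [k ->].
   apply Rnot_lt_le. intros Hk. apply Hn. exists k; auto. }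
 assert (step_a : forall eta, 0 < eta -> exists N1, forall N, (N1 <= N)%nat -> q (A N) <= r + eta).
 { intros eta He. destruct (r_approx (eta/2)) as [M HM]. lra.
   set (eta' := Rmin 1 (eta / (2 * (2*Y+1)))).
   assert (He' : 0 < eta') by (unfold eta'; apply Rmin_glb_lt; [lra|apply Rdiv_lt_0_compat; lra]).
   assert (He1 : eta' <= 1) by apply Rmin_l. assert (He2 : eta' <= eta / (2 * (2*Y+1))) by apply Rmin_r.
   destruct (small_inv (2 * INR (S M) * Y) eta' He') as [N1 HN1]. exists N1. intros N HN.
   specialize (HN1 N HN). set (dN := 2 * INR (S M) * Y / INR (S N)) in HN1.
   set (u := avg T (A M) (S N)).
   assert (Hd : L1 (ssub (A N) u) dN) by (apply L1_ssub_sym; apply KL; auto; lia).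
   assert (Heq : A N = sadd u (ssub (A N) u)) by (apply functional_extensionality; intros; unfold sadd, ssub; ring).
   assert (HSu : SQ u (q (A M))) by (apply SQ_avg with Y; auto; lia).
   assert (Hbu : forall i, Rabs (u i) <= Y) by (intros; eapply L1_pt; apply avg_L1; eauto; lia).
   assert (HS := SQ_perturb _ _ _ _ _ Hbu HSu Hd (Rle_trans _ _ _ HN1 He1)). rewrite <- Heq in HS.
   apply q_le in HS. assert ((2*Y+1) * dN <= eta/2).
   { assert ((2*Y+1) * dN <= (2*Y+1) * (eta / (2 * (2*Y+1)))) by (apply Rmult_le_compat_l; lra).
     replace ((2*Y+1) * (eta / (2 * (2*Y+1)))) with (eta/2) in H by (field; lra). lra. }
   lra. }
 assert (step_b : forall N N', r <= q (sscal (/2) (sadd (A N) (A N')))).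
 { intros N N'. set (w := sscal (/2) (sadd (A N) (A N'))).
   assert (Lw : L1 w Y). { eapply L1_weaken. apply L1_scal. apply L1_add; apply LA.
     rewrite Rabs_right; lra. }
   assert (Sw : SQ w (q w)) by (eapply q_SQ; apply L1_SQ; eauto).
   apply le_eps. intros eps0 He0.
   set (c := INR (S N) * Y + INR (S N') * Y).
   set (eta' := Rmin 1 (eps0 / (2*Y+1))).
   assert (He' : 0 < eta') by (unfold eta'; apply Rmin_glb_lt; [lra|apply Rdiv_lt_0_compat; lra]).
   assert (He1 : eta' <= 1) by apply Rmin_l. assert (He2 : eta' <= eps0 / (2*Y+1)) by apply Rmin_r.
   destruct (small_inv c eta' He') as [K HK]. specialize (HK K (le_n _)).
   set (u := avg T w (S K)).
   set (e := ssub (A K) u).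
   assert (Hu_eq : u = sscal (/2) (sadd (avg T (A N) (S K)) (avg T (A N') (S K)))).
   { unfold u, w. rewrite avg_scal, avg_add; eauto using L1_bounded. apply bounded_add; eauto using L1_bounded. }
   assert (He_eq : e = sscal (/2) (sadd (ssub (A K) (avg T (A N) (S K))) (ssub (A K) (avg T (A N') (S K))))).
   { unfold e. rewrite Hu_eq. apply functional_extensionality; intros; unfold ssub, sscal, sadd; field. }
   assert (Le : L1 e (c / INR (S K))).
   { rewrite He_eq. eapply L1_weaken. apply L1_scal. apply L1_add; apply L1_ssub_sym; apply KL with (Y := Y); auto; lia.
     rewrite Rabs_right by lra. right. unfold c. field. apply not_0_INR; lia. }
   assert (Heq : A K = sadd u e) by (apply functional_extensionality; intros; unfold e, sadd, ssub; ring).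
   assert (HSu : SQ u (q w)) by (apply SQ_avg with Y; auto; lia).
   assert (Hbu : forall i, Rabs (u i) <= Y) by (intros; eapply L1_pt; apply avg_L1; eauto; lia).
   assert (HS := SQ_perturb _ _ _ _ _ Hbu HSu Le (Rle_trans _ _ _ HK He1)). rewrite <- Heq in HS.
   apply q_le in HS. specialize (r_le K).
   assert ((2*Y+1) * (c / INR (S K)) <= eps0).
   { assert ((2*Y+1) * (c / INR (S K)) <= (2*Y+1) * (eps0 / (2*Y+1))) by (apply Rmult_le_compat_l; lra).
     replace ((2*Y+1) * (eps0 / (2*Y+1))) with eps0 in H by (field; lra). lra. }
   lra. }
 set (eta := eps^2 / 8). assert (Heta : 0 < eta) by (unfold eta; nra).
 destruct (step_a eta Heta) as [N1 HN1]. exists N1. intros N N' HN HN' i.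
 set (w := sscal (/2) (sadd (A N) (A N'))).
 assert (Sw : SQ w (q w)) by (eapply q_SQ; apply L1_SQ with (B := Y); eapply L1_weaken; [apply L1_scal; apply L1_add; apply LA|]; rewrite Rabs_right; lra).
 destruct (q_approx w _ eta Sw Heta) as [m0 Hm0].
 set (m := max (S i) m0).
 set (dd := fun j => ((A N j - A N' j)/2)^2).
 assert (H1 : dd i <= fsum dd m).
 { eapply Rle_trans; [|apply (fsum_mono dd (S i) m)]. simpl. assert (0 <= fsum dd i) by (apply fsum_nonneg; intros; unfold dd; apply pow2_ge_0). lra.
   intros; unfold dd; apply pow2_ge_0. lia. }
 assert (H2 : fsum dd m = fsum (fun j => (A N j)^2) m / 2 + fsum (fun j => (A N' j)^2) m / 2 - fsum (fun j => (w j)^2) m).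
 { unfold Rdiv. rewrite !(Rmult_comm _ (/2)). rewrite <- !fsum_scal. rewrite <- fsum_plus, <- fsum_minus. apply fsum_ext. intros j _. unfold dd, w, sscal, sadd. field. }
 assert (H3 : fsum (fun j => (w j)^2) m0 <= fsum (fun j => (w j)^2) m) by (apply fsum_mono; [intros; apply pow2_ge_0|lia]).
 assert (H4 := SA N m). assert (H5 := SA N' m). assert (H6 := HN1 N HN). assert (H7 := HN1 N' HN'). assert (H8 := step_b N N').
 fold w in H8.
 assert (Hdd : dd i <= 2 * eta) by lra.
 apply sq_le_abs; auto. unfold dd in Hdd. unfold eta in Hdd.
 change (avg T y (S N) i) with (A N i). change (avg T y (S N') i) with (A N' i).
 replace ((A N i - A N' i) ^ 2) with (4 * ((A N i - A N' i) / 2) ^ 2) by field. lra. Qed.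


Definition c0' (x : seqR) : Prop := forall e, 0 < e -> exists N, forall m, (N <= m)%nat -> Rabs (x m) < e.

Lemma finite_argmax x F N : (exists m0, (m0 < N)%nat /\ ~ In m0 F) ->
  exists i, (i < N)%nat /\ ~ In i F /\ forall m, (m < N)%nat -> ~ In m F -> Rabs (x m) <= Rabs (x i).
Proof. induction N; intros [m0 [Hm0 Hm0F]]. lia.
 destruct (classic (exists m1, (m1 < N)%nat /\ ~ In m1 F)) as [Hex|Hnex].
 - destruct (IHN Hex) as [i [Hi [HiF Him]]].
   destruct (classic (In N F)) as [HN|HN].
   + exists i. split; [lia|split; auto]. intros m Hm HmF. destruct (Nat.eq_dec m N); [subst; tauto|]. apply Him; auto; lia.
   + destruct (Rle_dec (Rabs (x N)) (Rabs (x i))).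
     * exists i. split; [lia|split; auto]. intros m Hm HmF. destruct (Nat.eq_dec m N); [subst; auto|]. apply Him; auto; lia.
     * exists N. split; [lia|split; auto]. intros m Hm HmF. destruct (Nat.eq_dec m N); [subst; lra|].
       specialize (Him m ltac:(lia) HmF). lra.
 - exists N. assert (HN : ~ In N F).
   { destruct (Nat.eq_dec m0 N); [subst; auto|]. exfalso; apply Hnex; exists m0; split; auto; lia. }
   split; [lia|split; auto]. intros m Hm HmF. destruct (Nat.eq_dec m N); [subst; lra|].
   exfalso; apply Hnex; exists m; split; auto; lia. Qed.

Lemma argmax_c0 x F : c0' x -> exists i, ~ In i F /\ forall m, ~ In m F -> Rabs (x m) <= Rabs (x i).
Proof. intros Hx. destruct (classic (exists m0, ~ In m0 F /\ x m0 <> 0)) as [[m0 [Hm0 Hx0]]|Hn].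
 - assert (Ha : 0 < Rabs (x m0)) by (apply Rabs_pos_lt; auto).
   destruct (Hx _ Ha) as [N HN].
   assert (Hm0N : (m0 < N)%nat). { destruct (Nat.lt_ge_cases m0 N); auto. specialize (HN m0 H). lra. }
   destruct (finite_argmax x F N) as [i [Hi [HiF Him]]]. exists m0; auto.
   exists i. split; auto. intros m HmF. destruct (Nat.lt_ge_cases m N). apply Him; auto.
   specialize (HN m H). specialize (Him m0 Hm0N Hm0). lra.
 - destruct (fresh_notin F) as [i Hi]. exists i. split; auto. intros m HmF.
   assert (x m = 0). { apply NNPP; intros Hxm; apply Hn; exists m; auto. }
   rewrite H, Rabs_R0. apply Rabs_pos. Qed.

Lemma greedy_fun x : c0' x -> exists am : list nat -> nat,
  forall F, ~ In (am F) F /\ forall m, ~ In m F -> Rabs (x m) <= Rabs (x (am F)).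
Proof. intros Hx. exists (fun F => proj1_sig (constructive_indefinite_description _ (argmax_c0 x F Hx))).
 intros F. exact (proj2_sig (constructive_indefinite_description _ (argmax_c0 x F Hx))). Qed.

Fixpoint pre (am : list nat -> nat) (n : nat) : list nat :=
  match n with O => nil | S n => am (pre am n) :: pre am n end.

Definition AM (x : seqR) (am : list nat -> nat) : Prop :=
  forall F, ~ In (am F) F /\ forall m, ~ In m F -> Rabs (x m) <= Rabs (x (am F)).

Lemma pre_len am n : length (pre am n) = n.
Proof. induction n; simpl; auto. Qed.

Lemma pre_nodup x am n : AM x am -> NoDup (pre am n).
Proof. intros H. induction n; simpl; constructor; auto. apply H. Qed.

Lemma pre_incl am j n : (j <= n)%nat -> incl (pre am j) (pre am n).
Proof. intros H. induction H. apply incl_refl. simpl. apply incl_tl; auto. Qed.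

Lemma g_decr x am j n : AM x am -> (j <= n)%nat -> Rabs (x (am (pre am n))) <= Rabs (x (am (pre am j))).
Proof. intros H Hjn. apply (proj2 (H (pre am j))). intros Hin. apply (pre_incl am j n Hjn) in Hin.
 apply (proj1 (H (pre am n))); auto. Qed.

Lemma rearr_g x am n : AM x am -> bounded x -> rearr x n = Rabs (x (am (pre am n))).
Proof. intros H Hb. apply Rle_antisym.
 - eapply Rle_trans. apply rearr_le with (F := pre am n); auto. eapply pre_nodup; eauto. rewrite pre_len; auto.
   apply sup_out_le. apply H.
 - apply rearr_ge. intros F HF Hl.
   assert (Hex : exists j, (j <= n)%nat /\ ~ In (am (pre am j)) F).
   { apply NNPP. intros Hn. assert (incl (pre am (S n)) F).
     { intros m Hm. simpl in Hm. apply NNPP. intros HmF.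
       assert (exists j, (j <= n)%nat /\ m = am (pre am j)).
       { clear -Hm. induction n. simpl in Hm. destruct Hm as [<-|[]]. exists 0%nat; auto.
         simpl in Hm. destruct Hm as [<-|Hm]. exists (S n); auto.
         destruct (IHn Hm) as [j [Hj ->]]. exists j; split; auto. }
       destruct H0 as [j [Hj ->]]. apply Hn. exists j; auto. }
     apply NoDup_incl_length in H0. rewrite pre_len in H0. lia. eapply pre_nodup; eauto. }
   destruct Hex as [j [Hj HjF]]. eapply Rle_trans. apply (g_decr x am j n H Hj).
   apply sup_out_ge; auto. Qed.

Definition lsum (f : nat -> R) (L : list nat) : R := fold_right (fun i acc => f i + acc) 0 L.

Lemma lsum_pre f am n : lsum f (pre am n) = fsum (fun j => f (am (pre am j))) n.
Proof. induction n; simpl; auto. unfold lsum in *. simpl. rewrite IHn. ring. Qed.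

Lemma lsum_ext f g L : (forall i, In i L -> f i = g i) -> lsum f L = lsum g L.
Proof. induction L; simpl; intros H; auto. unfold lsum in *; simpl. rewrite H by auto. rewrite IHL; auto. Qed.

Lemma fsum_remove f a m : fsum f m = fsum (fun i => if Nat.eqb i a then 0 else f i) m + (if Nat.ltb a m then f a else 0).
Proof. induction m; simpl. ring. rewrite IHm.
 destruct (Nat.eqb_spec m a); destruct (Nat.ltb_spec a m); destruct (Nat.ltb_spec a (S m)); subst; try lia; ring. Qed.

Lemma LS1 L : NoDup L -> forall f, (forall i, 0 <= f i) -> (forall i, ~ In i L -> f i = 0) -> forall m, fsum f m <= lsum f L.
Proof. induction L as [|a L IH]; intros HL f Hf Hz m.
 - simpl. rewrite (fsum_ext _ (fun _ => 0)). rewrite fsum_const; unfold lsum; simpl; lra. intros; apply Hz; auto.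
 - inversion HL; subst. set (f' := fun i => if Nat.eqb i a then 0 else f i).
   assert (Hq1 : fsum f' m <= lsum f' L).
   { apply IH; auto. intros i; unfold f'; destruct (Nat.eqb i a); auto; lra.
     intros i Hi. unfold f'. destruct (Nat.eqb_spec i a); auto. apply Hz. simpl. intros [Heq|Hin]; [congruence|tauto]. }
   rewrite (lsum_ext f' f) in Hq1. rewrite (fsum_remove f a m). fold f'. unfold lsum; simpl. fold (lsum f L).
   destruct (Nat.ltb a m); specialize (Hf a); lra.
   intros i Hi. unfold f'. destruct (Nat.eqb_spec i a); subst; tauto. Qed.

Lemma LS2 L : NoDup L -> forall f B, (forall i, 0 <= f i) -> (forall m, fsum f m <= B) -> lsum f L <= B.
Proof. induction L as [|a L IH]; intros HL f B Hf HB.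
 - unfold lsum; simpl. apply (HB 0%nat).
 - inversion HL; subst. set (f' := fun i => if Nat.eqb i a then 0 else f i).
   assert (Hq1 : lsum f' L <= B - f a).
   { apply IH; auto. intros i; unfold f'; destruct (Nat.eqb i a); auto; lra.
     intros m. pose proof (fsum_remove f a m). fold f' in H. destruct (Nat.ltb_spec a m).
     specialize (HB m). lra.
     assert (fsum f m <= fsum f a) by (apply fsum_mono; auto). specialize (HB (S a)). simpl in HB. lra. }
   rewrite (lsum_ext f' f) in Hq1. unfold lsum; simpl. fold (lsum f L). lra.
   intros i Hi. unfold f'. destruct (Nat.eqb_spec i a); subst; tauto. Qed.


Definition cl (lam v : R) : R := Rmax (-lam) (Rmin lam v).

Ltac rcases := unfold cl, Rmax, Rmin, Rabs in *; repeat match goal with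
  | |- context [Rle_dec ?a ?b] => destruct (Rle_dec a b)
  | |- context [Rcase_abs ?a] => destruct (Rcase_abs a)
  | H : context [Rcase_abs ?a] |- _ => destruct (Rcase_abs a)
  | H : context [Rle_dec ?a ?b] |- _ => destruct (Rle_dec a b) end; lra.

Lemma cl_abs lam v : 0 <= lam -> Rabs (cl lam v) <= lam.
Proof. intros. rcases. Qed.
Lemma cl_id lam v : Rabs v <= lam -> cl lam v = v.
Proof. intros. rcases. Qed.
Lemma cl_diff lam v : 0 <= lam -> lam <= Rabs v -> Rabs (v - cl lam v) <= Rabs v - lam.
Proof. intros. rcases. Qed.

Lemma majorize T x xh : dunford_schwartz T -> bounded x -> c0' x -> bounded xh ->
  (forall d, 0 < d -> exists N, forall i, Rabs (xh i - avg T x (S N) i) <= d) -> majorized xh x.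
Proof. intros HT Hb Hc Hbh Happ k. rewrite !sum_n_fsum.
 destruct (greedy_fun x Hc) as [am Ham]. fold (AM x am) in Ham.
 set (g := fun n => am (pre am n)).
 set (lam := Rabs (x (g k))). assert (Hlam : 0 <= lam) by apply Rabs_pos.
 set (x2 := fun i => cl lam (x i)). set (x1 := ssub x x2).
 assert (Hx1z : forall i, ~ In i (pre am k) -> Rabs (x1 i) = 0).
 { intros i Hi. unfold x1, ssub, x2. rewrite cl_id. rewrite Rminus_diag, Rabs_R0; auto. apply Ham; auto. }
 assert (Hx2 : forall i, Rabs (x2 i) <= lam) by (intros; apply cl_abs; auto).
 assert (Hbx2 : bounded x2) by (exists lam; auto).
 set (B1 := lsum (fun i => Rabs (x1 i)) (pre am k)).
 assert (L1x1 : L1 x1 B1).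
 { apply L1_of_bound. intros m. apply LS1. eapply pre_nodup; eauto. intros; apply Rabs_pos. auto. }
 assert (HB1 : B1 <= fsum (fun j => Rabs (x (g j))) k - INR k * lam).
 { unfold B1. rewrite lsum_pre. rewrite <- fsum_const, <- fsum_minus. apply fsum_le. intros j Hj.
   unfold x1, ssub, x2. fold (g j). apply cl_diff; auto. apply g_decr; auto; lia. }
 assert (Hrx : fsum (rearr x) (S k) = fsum (fun j => Rabs (x (g j))) k + lam).
 { simpl. rewrite (fsum_ext _ (fun j => Rabs (x (g j)))). rewrite rearr_g with (am := am); auto.
   intros; apply rearr_g; auto. }
 apply le_eps. intros eta Heta.
 assert (HSk : 0 < INR (S k)) by (apply lt_0_INR; lia).
 set (d := eta / INR (S k)). assert (Hd : 0 < d) by (unfold d; apply Rdiv_lt_0_compat; lra).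
 destruct (Happ d Hd) as [N HN].
 set (z1 := avg T x1 (S N)). set (z2 := avg T x2 (S N)).
 assert (Hsplit : avg T x (S N) = sadd z1 z2).
 { unfold z1, z2. rewrite <- avg_add; eauto using L1_bounded. f_equal. apply functional_extensionality; intros; unfold sadd, x1, ssub; ring. }
 assert (Lz1 : L1 z1 B1) by (apply avg_L1; auto; lia).
 assert (Hz2 : forall i, Rabs (z2 i) <= lam) by (intros; apply avg_sup; auto; lia).
 destruct (greedy_fun z1 (L1_c0 _ _ Lz1)) as [am' Ham']. fold (AM z1 am') in Ham'.
 set (h := fun n => am' (pre am' n)).
 assert (Hr : forall n, rearr xh n <= Rabs (z1 (h n)) + (lam + d)).
 { intros n. eapply Rle_trans. apply rearr_le with (F := pre am' n); auto. eapply pre_nodup; eauto. rewrite pre_len; auto.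
   apply sup_out_le. intros m Hm. specialize (HN m). rewrite Hsplit in HN. unfold sadd in HN.
   assert (Rabs (z1 m) <= Rabs (z1 (h n))) by (apply Ham'; auto). specialize (Hz2 m).
   pose proof (Rabs_triang (xh m - (z1 m + z2 m)) (z1 m + z2 m)). pose proof (Rabs_triang (z1 m) (z2 m)).
   replace (xh m - (z1 m + z2 m) + (z1 m + z2 m)) with (xh m) in H0 by ring. lra. }
 assert (H1 : fsum (rearr xh) (S k) <= fsum (fun n => Rabs (z1 (h n)) + (lam + d)) (S k)) by (apply fsum_le; auto).
 rewrite fsum_plus, fsum_const in H1.
 assert (H2 : fsum (fun n => Rabs (z1 (h n))) (S k) <= B1).
 { unfold h. rewrite <- (lsum_pre (fun i => Rabs (z1 i))). apply LS2. eapply pre_nodup; eauto. intros; apply Rabs_pos. apply Lz1. }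
 assert (H3 : INR (S k) * d = eta) by (unfold d; field; lra).
 rewrite S_INR in *. lra. Qed.


Lemma bounded_sub u v : bounded u -> bounded v -> bounded (ssub u v).
Proof. intros [A HA] [B HB]. exists (A + B). intros n. unfold ssub.
 eapply Rle_trans; [apply Rabs_triang|]. rewrite Rabs_Ropp. specialize (HA n); specialize (HB n); lra. Qed.

Lemma c0_c0' x : in_c0 x -> c0' x.
Proof. intros H e He. apply is_lim_seq_spec in H. destruct (H (mkposreal e He)) as [N HN].
 exists N. intros m Hm. specialize (HN m Hm). simpl in HN. rewrite Rminus_0_r in HN. auto. Qed.

Lemma c0'_c0 x : c0' x -> in_c0 x.
Proof. intros H. apply is_lim_seq_spec. intros [e He]. destruct (H e He) as [N HN].
 exists N. intros m Hm. simpl. rewrite Rminus_0_r. auto. Qed.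

Lemma L1_tr_fin x n0 : L1 (tr x n0) (fsum (fun i => Rabs (x i)) n0).
Proof. apply L1_of_bound. intros m.
 eapply Rle_trans. apply (fsum_mono (fun i => Rabs (tr x n0 i)) m (n0 + m)). intros; apply Rabs_pos. lia.
 rewrite fsum_split. rewrite (fsum_ext (fun k => Rabs (tr x n0 (n0 + k)%nat)) (fun _ => 0)).
 rewrite fsum_const. rewrite (fsum_ext (fun i => Rabs (tr x n0 i)) (fun i => Rabs (x i))). lra.
 intros i Hi. unfold tr. destruct (Nat.ltb_spec i n0); [auto|lia].
 intros k _. unfold tr. destruct (Nat.ltb_spec (n0 + k) n0); [lia|apply Rabs_R0]. Qed.

Lemma unif_cauchy T x : dunford_schwartz T -> bounded x -> c0' x -> forall eps, 0 < eps -> exists N0, forall N N',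
  (N0 <= N)%nat -> (N0 <= N')%nat -> forall i, Rabs (avg T x (S N) i - avg T x (S N') i) <= eps.
Proof. intros HT Hb Hc eps He. destruct (Hc (eps/3)) as [n0 Hn0]. lra.
 set (y := tr x n0). set (w := fun i => if Nat.ltb i n0 then 0 else x i).
 assert (Hw : forall i, Rabs (w i) <= eps/3).
 { intros i. unfold w. destruct (Nat.ltb_spec i n0). rewrite Rabs_R0; lra. left; apply Hn0; lia. }
 assert (Hbw : bounded w) by (exists (eps/3); auto).
 assert (Hx : x = sadd y w) by (apply functional_extensionality; intros i; unfold sadd, y, w, tr; destruct (Nat.ltb i n0); ring).
 destruct (avg_cauchy T y _ HT (L1_tr_fin x n0) (eps/3)) as [N0 HN0]. lra.
 assert (Hby : bounded y) by apply tr_bounded.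
 exists N0. intros N N' HN HN' i. rewrite Hx, !avg_add; auto. unfold sadd.
 specialize (HN0 N N' HN HN' i).
 assert (H1 := avg_sup T w (S N) (eps/3) HT Hbw Hw ltac:(lia) i).
 assert (H2 := avg_sup T w (S N') (eps/3) HT Hbw Hw ltac:(lia) i).
 replace (avg T y (S N) i + avg T w (S N) i - (avg T y (S N') i + avg T w (S N') i)) with
   ((avg T y (S N) i - avg T y (S N') i) + (avg T w (S N) i - avg T w (S N') i)) by ring.
 eapply Rle_trans. apply Rabs_triang. eapply Rle_trans with (eps/3 + (eps/3 + eps/3)); [|lra].
 apply Rplus_le_compat; auto. eapply Rle_trans. apply Rabs_triang. rewrite Rabs_Ropp. lra. Qed.

Lemma iet_of_c0 E normE : fully_symmetric_seq_space E normE -> (forall x, E x -> in_c0 x) -> uniform_IET_property E.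
Proof. intros HE Hc0 x Ex T HT.
 destruct HE as [[[Hbd _] [Hsym _]] Hfull].
 assert (Hb : bounded x) by auto. assert (Hc : c0' x) by (apply c0_c0'; auto).
 assert (HC := unif_cauchy T x HT Hb Hc).
 assert (Hex : forall i, exists l : R, is_lim_seq (fun N => avg T x (S N) i) l).
 { intros i. apply (proj2 (ex_lim_seq_cauchy_corr (fun N => avg T x (S N) i))). intros [e He].
   destruct (HC (e/2)) as [N0 HN0]. lra. exists N0. intros n m Hn Hm. simpl. specialize (HN0 n m Hn Hm i). lra. }
 set (xh := fun i => proj1_sig (constructive_indefinite_description _ (Hex i))).
 assert (Hxh : forall i, is_lim_seq (fun N => avg T x (S N) i) (xh i)).
 { intros i. unfold xh. exact (proj2_sig (constructive_indefinite_description _ (Hex i))). }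
 assert (Hunif : forall eps, 0 < eps -> exists N0, forall N, (N0 <= N)%nat -> forall i, Rabs (avg T x (S N) i - xh i) <= eps).
 { intros eps He. destruct (HC eps He) as [N0 HN0]. exists N0. intros N HN i.
   assert (Hl : is_lim_seq (fun N' => Rabs (avg T x (S N) i - avg T x (S N') i)) (Rabs (avg T x (S N) i - xh i))).
   { apply (is_lim_seq_abs _ (Finite (avg T x (S N) i - xh i))). apply is_lim_seq_minus'. apply is_lim_seq_const. auto. }
   assert (H := is_lim_seq_le_loc _ (fun _ => eps) _ _ (ex_intro _ N0 (fun N' HN' => HN0 N N' HN HN' i)) Hl (is_lim_seq_const eps)).
   simpl in H. auto. }
 destruct Hb as [M HM].
 assert (Hbh : bounded xh).
 { destruct (Hunif 1) as [N0 HN0]. lra. exists (M + 1). intros i. specialize (HN0 N0 (le_n _) i).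
   assert (H1 := avg_sup T x (S N0) M HT (ex_intro _ M HM) HM ltac:(lia) i).
   pose proof (Rabs_triang (xh i - avg T x (S N0) i) (avg T x (S N0) i)).
   replace (xh i - avg T x (S N0) i + avg T x (S N0) i) with (xh i) in H by ring.
   rewrite Rabs_minus_sym in HN0. lra. }
 exists xh. split.
 - assert (Hmaj : majorized xh x).
   { apply majorize with T; auto.
     intros d Hd. destruct (Hunif d Hd) as [N0 HN0]. exists N0. intros i. rewrite Rabs_minus_sym. auto. }
   apply (proj1 (Hfull xh x Hbh Ex Hmaj)).
 - apply is_lim_seq_spec. intros [e He]. destruct (Hunif (e/2)) as [N0 HN0]. lra. exists N0. intros N HN. simpl.
   rewrite Rminus_0_r, avg_eq. rewrite Rabs_right.
   assert (linf_norm (ssub (avg T x (S N)) xh) <= e/2) by (apply linf_le; intros; apply HN0; auto). lra.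
   apply Rle_ge, linf_nonneg, bounded_sub; auto. apply avg_bnd; auto. Qed.


Lemma notin_big (F : list nat) m : (list_max F < m)%nat -> ~ In m F.
Proof. intros Hm H.
 assert (H0 : List.Forall (fun k => (k <= list_max F)%nat) F) by (apply list_max_le; lia).
 rewrite Forall_forall in H0. specialize (H0 _ H). lia. Qed.

Lemma one_in E normE x : symmetric_seq_space E normE -> E x -> ~ in_c0 x -> E one_seq.
Proof. intros [[Hbd [_ [_ [_ [Hsc _]]]]] [Hsym _]] Ex Hn.
 assert (Hex : exists e, 0 < e /\ forall N, exists m, (N <= m)%nat /\ e <= Rabs (x m)).
 { apply NNPP. intros H. apply Hn. apply c0'_c0. intros e He. apply NNPP. intros H2. apply H. exists e. split; auto.
   intros N. apply NNPP. intros H3. apply H2. exists N. intros m Hm. apply Rnot_le_lt. intros H4. apply H3. exists m; auto. }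
 destruct Hex as [e [He Hm]].
 set (y := sscal (/ e) x). assert (Ey : E y) by (apply Hsc; auto).
 assert (Hby : bounded y) by auto.
 assert (Hb1 : bounded one_seq) by (exists 1; intros; unfold one_seq; rewrite Rabs_R1; lra).
 assert (Hr : forall n, rearr one_seq n <= rearr y n).
 2: apply (proj1 (Hsym one_seq y Ey Hb1 Hr)).
 intros n. apply Rle_trans with 1.
 - eapply Rle_trans. apply rearr_le with (F := nil). exists 1; intros; unfold one_seq; rewrite Rabs_R1; lra. constructor. simpl; lia.
   apply sup_out_le. intros; unfold one_seq; rewrite Rabs_R1; lra.
 - apply rearr_ge. intros F HF Hl. destruct (Hm (S (list_max F))) as [m [Hm1 Hm2]].
   eapply Rle_trans; [|apply (sup_out_ge y F m Hby); apply notin_big; lia].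
   unfold y, sscal. rewrite Rabs_mult, Rabs_right by (left; apply Rinv_0_lt_compat; auto).
   apply Rmult_le_reg_l with e; auto. rewrite <- Rmult_assoc, Rinv_r, Rmult_1_l; lra. Qed.

Definition sh (x : seqR) : seqR := fun n => match n with O => 0 | S n' => x n' end.

Lemma sh_DS : dunford_schwartz sh.
Proof. split; [split|split].
 - intros x [M HM]. exists M. intros [|n]; simpl. rewrite Rabs_R0. specialize (HM 0%nat). pose proof (Rabs_pos (x 0%nat)). lra. auto.
 - intros x y a b _ _. apply functional_extensionality; intros [|n]; unfold sadd, sscal; simpl; ring.
 - intros x Hx. assert (H : ex_series (fun n => Rabs (sh x n))).
   { apply (proj2 (ex_series_incr_1 (fun n => Rabs (sh x n)))). exact Hx. }
   split; auto. unfold l1_norm. rewrite Series_incr_1 by auto. simpl. rewrite Rabs_R0. right; ring.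
 - intros x Hx. apply linf_le. intros [|n]; simpl. rewrite Rabs_R0. apply linf_nonneg; auto. apply linf_ge; auto. Qed.

Lemma sh_iter k m : Nat.iter k sh one_seq m = if Nat.leb k m then 1 else 0.
Proof. revert m. induction k; intros m. reflexivity.
 simpl. destruct m. reflexivity. unfold sh. rewrite IHk. reflexivity. Qed.

Lemma fsum_ind k n : fsum (fun j => if Nat.leb j k then 1 else 0) n = INR (Nat.min n (S k)).
Proof. induction n. reflexivity. simpl fsum. rewrite IHn. destruct (Nat.leb_spec n k).
 rewrite Nat.min_l by lia. rewrite Nat.min_l by lia. rewrite S_INR; ring.
 rewrite Nat.min_r by lia. rewrite Nat.min_r by lia. ring. Qed.

Lemma ces_sh N m : cesaro sh one_seq N m = / INR (S N) * INR (Nat.min (S N) (S m)).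
Proof. unfold cesaro. rewrite sum_n_fsum. rewrite (fsum_ext _ (fun j => if Nat.leb j m then 1 else 0)).
 rewrite fsum_ind. reflexivity. intros; apply sh_iter. Qed.

Lemma no_one E : uniform_IET_property E -> (forall x, E x -> bounded x) -> ~ E one_seq.
Proof. intros H Hbd Hone. destruct (H one_seq Hone sh sh_DS) as [xh [Exh Hl]].
 apply is_lim_seq_spec in Hl. destruct (Hl (mkposreal (1/4) ltac:(lra))) as [N1 HN1].
 assert (Hb : forall N, bounded (ssub (cesaro sh one_seq N) xh)).
 { intros N. apply bounded_sub; auto. rewrite avg_eq. apply avg_bnd. apply sh_DS. exists 1; intros; unfold one_seq; rewrite Rabs_R1; lra. }
 assert (H1 := HN1 N1 (le_n _)). assert (H2 := HN1 (S (2 * N1)) ltac:(lia)). simpl in H1, H2. replace (S (N1 + (N1 + 0))) with (S (2 * N1)) in H2 by lia.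
 assert (H1' := linf_ge _ N1 (Hb N1)). assert (H2' := linf_ge _ N1 (Hb (S (2*N1)))).
 unfold ssub in H1, H2, H1', H2'. rewrite ces_sh in H1', H2'.
 rewrite Nat.min_l in H1' by lia. rewrite Nat.min_r in H2' by lia.
 rewrite Rinv_l in H1' by (apply not_0_INR; lia).
 replace (/ INR (S (S (2 * N1))) * INR (S N1)) with (1/2) in H2'.
 2:{ replace (S (S (2 * N1))) with (2 * S N1)%nat by lia. rewrite mult_INR. simpl (INR 2). field.
     apply not_0_INR; lia. }
 rewrite Rminus_0_r in H1, H2. rewrite Rabs_right in H1, H2 by (apply Rle_ge, linf_nonneg; apply (Hb _)).
 pose proof (Rabs_triang (1 - xh N1) (xh N1 - 1/2)). rewrite Rabs_minus_sym in H2'.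
 replace (1 - xh N1 + (xh N1 - 1/2)) with (1/2) in H0 by field. rewrite Rabs_right in H0 by lra. lra. Qed.

Lemma one_not_c0 : ~ in_c0 one_seq.
Proof. intros H. unfold in_c0, one_seq in H. pose proof (is_lim_seq_unique _ _ H).
 rewrite (is_lim_seq_unique _ _ (is_lim_seq_const 1)) in H0. injection H0. lra. Qed.

Theorem theorem3p6 (E : seqR -> Prop) (normE : seqR -> R) :
  fully_symmetric_seq_space E normE ->
  (uniform_IET_property E <-> (forall x, E x -> in_c0 x)) /\
  ((forall x, E x -> in_c0 x) <-> ~ E one_seq).
Proof. intros HE. pose proof HE as [Hs _]. pose proof Hs as [[Hbd _] _]. split; split.
 - intros Hiet x Ex. destruct (classic (in_c0 x)) as [|Hn]; auto. exfalso.
   apply (no_one E Hiet Hbd). eapply one_in; eauto.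
 - intros Hc. eapply iet_of_c0; eauto.
 - intros Hc Hone. apply one_not_c0. auto.
 - intros Hn x Ex. destruct (classic (in_c0 x)) as [|Hn']; auto. exfalso. apply Hn. eapply one_in; eauto. Qed.
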